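(* Let $A,B\in\mathcal{F}_2$ be commonly ordered configurations. For any fixed $d\ge d(A,B)$, there is a feasible schedule $M$ from $A$ to $B$ with makespan exactly $d$ in which each robot makes at most one turn.
   Context: Robots are axis-parallel unit squares: a robot at $p$ occupies $p+\boxdot$, $\boxdot=\{q:\|q\|_\infty\le1/2\}$. Distances use the $L_1$ norm $\|p\|=|x(p)|+|y(p)|$. A configuration of two robots is a pair $(p_1,p_2)$ with $\|p_1-p_2\|_\infty\ge 1$; $\mathcal{F}_2$ is their set. A trajectory from $a$ to $b$ over $T=[t_0,t_1]$ is a $1$-Lipschitz (w.r.t. $L_1$) map $m:T\to\mathbb{R}^2$, $m(t_0)=a$, $m(t_1)=b$, whose image is a polygonal chain; a turn is a point of the image where two segments of different orientations meet. A schedule $M=(m_1,m_2)$ over $T$ is feasible if $M(t)\in\mathcal{F}_2$ for all $t$; its makespan is $t_1-t_0$. The diameter is $d(A,B)=\max_i\|a_i-b_i\|$. The four orderings are $\mathcal{F}_2^{\rightarrow}=\{(p_1,p_2)\in\mathcal{F}_2: x(p_1)\ge x(p_2)+1\}$, $\mathcal{F}_2^{\leftarrow}=\{x(p_2)\ge x(p_1)+1\}$, $\mathcal{F}_2^{\uparrow}=\{y(p_1)\ge y(p_2)+1\}$, $\mathcal{F}_2^{\downarrow}=\{y(p_2)\ge y(p_1)+1\}$. Two configurations are commonly ordered if both lie in the same ordering. *)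

(* Defs.v *)
From Stdlib Require Import Reals.
Open Scope R_scope.

Definition pt := (R * R)%type.

Definition xc (p : pt) : R := fst p.
Definition yc (p : pt) : R := snd p.

Definition dist1 (p q : pt) : R := Rabs (xc p - xc q) + Rabs (yc p - yc q).
Definition distInf (p q : pt) : R := Rmax (Rabs (xc p - xc q)) (Rabs (yc p - yc q)).

Definition config := (pt * pt)%type.

Definition inF2 (P : config) : Prop := distInf (fst P) (snd P) >= 1.

Definition ordRight (P : config) : Prop := inF2 P /\ xc (fst P) >= xc (snd P) + 1.
Definition ordLeft  (P : config) : Prop := inF2 P /\ xc (snd P) >= xc (fst P) + 1.
Definition ordUp    (P : config) : Prop := inF2 P /\ yc (fst P) >= yc (snd P) + 1.
Definition ordDown  (P : config) : Prop := inF2 P /\ yc (snd P) >= yc (fst P) + 1.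

Definition commonly_ordered (A B : config) : Prop :=
  (ordRight A /\ ordRight B) \/ (ordLeft A /\ ordLeft B) \/
  (ordUp A /\ ordUp B) \/ (ordDown A /\ ordDown B).

Definition diam (A B : config) : R :=
  Rmax (dist1 (fst A) (fst B)) (dist1 (snd A) (snd B)).

Definition seg (p q : pt) (z : pt) : Prop :=
  exists l, 0 <= l <= 1 /\
    z = (xc p + l * (xc q - xc p), yc p + l * (yc q - yc p)).

Definition image (m : R -> pt) (t0 t1 : R) (z : pt) : Prop :=
  exists t, t0 <= t <= t1 /\ m t = z.

(* The image is a polygonal chain with at most one turn: it is the union of
   two segments [p,c] and [c,q] sharing the endpoint c (possibly degenerate). *)
Definition at_most_one_turn (m : R -> pt) (t0 t1 : R) : Prop :=
  exists p c q : pt, forall z, image m t0 t1 z <-> (seg p c z \/ seg c q z).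

Definition lipschitz1 (m : R -> pt) (t0 t1 : R) : Prop :=
  forall s t, t0 <= s <= t1 -> t0 <= t <= t1 -> dist1 (m s) (m t) <= Rabs (s - t).

Definition trajectory (m : R -> pt) (a b : pt) (t0 t1 : R) : Prop :=
  t0 <= t1 /\ m t0 = a /\ m t1 = b /\ lipschitz1 m t0 t1.

Definition feasible (m1 m2 : R -> pt) (t0 t1 : R) : Prop :=
  forall t, t0 <= t <= t1 -> inF2 (m1 t, m2 t).

(* Main.v *)
Require Import Defs.
From Stdlib Require Import Reals Lra.
Open Scope R_scope.

Definition lin (a b : pt) (d t : R) : pt :=
  (xc a + (t / d) * (xc b - xc a), yc a + (t / d) * (yc b - yc a)).

Lemma lin_at (a b : pt) d t : d > 0 -> 0 <= t <= d -> 0 <= t / d <= 1.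
Proof.
  intros Hd Ht. split.
  - apply Rmult_le_pos; [lra | left; apply Rinv_0_lt_compat; lra].
  - apply (Rmult_le_reg_r d); [lra|]. field_simplify; lra.
Qed.

Lemma one_robot (a b : pt) d : d > 0 -> dist1 a b <= d ->
  trajectory (lin a b d) a b 0 d /\ at_most_one_turn (lin a b d) 0 d.
Proof.
  intros Hd Hab. destruct a as [ax ay], b as [bx by0].
  unfold dist1, xc, yc in Hab; simpl in Hab.
  split.
  - split; [lra|]. split.
    + unfold lin, xc, yc; simpl. f_equal; field; lra.
    + split.
      * unfold lin, xc, yc; simpl. f_equal; field; lra.
      * intros s t Hs Ht. unfold dist1, lin, xc, yc; simpl.
        replace (ax + s / d * (bx - ax) - (ax + t / d * (bx - ax)))
          with ((s - t) / d * (bx - ax)) by (field; lra).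
        replace (ay + s / d * (by0 - ay) - (ay + t / d * (by0 - ay)))
          with ((s - t) / d * (by0 - ay)) by (field; lra).
        rewrite !Rabs_mult. rewrite <- Rmult_plus_distr_l.
        assert (Hr : Rabs ((s - t) / d) = Rabs (s - t) / d).
        { unfold Rdiv. rewrite Rabs_mult. rewrite (Rabs_right (/ d)). reflexivity.
          left; apply Rinv_0_lt_compat; lra. }
        rewrite Hr.
        assert (Hu : 0 <= Rabs (s - t) / d).
        { apply Rmult_le_pos; [apply Rabs_pos | left; apply Rinv_0_lt_compat; lra]. }
        apply Rle_trans with (Rabs (s - t) / d * d).
        -- apply Rmult_le_compat_l; [assumption|]. rewrite (Rabs_minus_sym bx), (Rabs_minus_sym by0); lra.
        -- right; field; lra.
  - exists (ax, ay), (bx, by0), (bx, by0). intros z. split.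
    + intros [t [Ht Hz]]. left. exists (t / d). split.
      * apply lin_at; assumption.
      * rewrite <- Hz. reflexivity.
    + intros [[l [Hl Hz]] | [l [Hl Hz]]].
      * exists (l * d). split.
        -- split; [apply Rmult_le_pos; lra|]. nra.
        -- rewrite Hz. unfold lin, xc, yc; simpl. f_equal; field; lra.
      * exists d. split; [lra|]. rewrite Hz. unfold lin, xc, yc; simpl.
        f_equal; field; lra.
Qed.

Lemma feas_lin (a1 a2 b1 b2 : pt) d : d > 0 ->
  commonly_ordered (a1, a2) (b1, b2) ->
  feasible (lin a1 b1 d) (lin a2 b2 d) 0 d.
Proof.
  intros Hd Hco t Ht. pose proof (lin_at a1 b1 d t Hd Ht) as Hl.
  set (l := t / d) in *.
  destruct a1 as [p q], a2 as [r s], b1 as [u v], b2 as [w x].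
  unfold inF2, distInf, lin, xc, yc in *; simpl in *. fold l.
  unfold commonly_ordered, ordRight, ordLeft, ordUp, ordDown, xc, yc in Hco; simpl in Hco.
  assert (H1 : 0 <= 1 - l) by lra.
  destruct Hco as [[[_ Ha] [_ Hb]] | [[[_ Ha] [_ Hb]] | [[[_ Ha] [_ Hb]] | [[_ Ha] [_ Hb]]]]].
  - assert (0 <= (1 - l) * (p - r - 1)) by (apply Rmult_le_pos; lra).
    assert (0 <= l * (u - w - 1)) by (apply Rmult_le_pos; lra).
    apply Rle_ge. eapply Rle_trans; [| apply Rmax_l].
    rewrite Rabs_right; lra.
  - assert (0 <= (1 - l) * (r - p - 1)) by (apply Rmult_le_pos; lra).
    assert (0 <= l * (w - u - 1)) by (apply Rmult_le_pos; lra).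
    apply Rle_ge. eapply Rle_trans; [| apply Rmax_l].
    rewrite Rabs_left1; lra.
  - assert (0 <= (1 - l) * (q - s - 1)) by (apply Rmult_le_pos; lra).
    assert (0 <= l * (v - x - 1)) by (apply Rmult_le_pos; lra).
    apply Rle_ge. eapply Rle_trans; [| apply Rmax_r].
    rewrite Rabs_right; lra.
  - assert (0 <= (1 - l) * (s - q - 1)) by (apply Rmult_le_pos; lra).
    assert (0 <= l * (x - v - 1)) by (apply Rmult_le_pos; lra).
    apply Rle_ge. eapply Rle_trans; [| apply Rmax_r].
    rewrite Rabs_left1; lra.
Qed.

Lemma dist1_zero (a b : pt) : dist1 a b <= 0 -> a = b.
Proof.
  destruct a as [ax ay], b as [bx by0]. unfold dist1, xc, yc; simpl. intros H.
  pose proof (Rabs_pos (ax - bx)). pose proof (Rabs_pos (ay - by0)).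
  assert (Rabs (ax - bx) = 0) by lra. assert (Rabs (ay - by0) = 0) by lra.
  destruct (Rcase_abs (ax - bx)); destruct (Rcase_abs (ay - by0)); [rewrite Rabs_left in H2 by lra | rewrite Rabs_left in H2 by lra | rewrite Rabs_right in H2 by lra | rewrite Rabs_right in H2 by lra]; [rewrite Rabs_left in H3 by lra | rewrite Rabs_right in H3 by lra | rewrite Rabs_left in H3 by lra | rewrite Rabs_right in H3 by lra]; f_equal; lra.
Qed.

Lemma const_turn (a : pt) : at_most_one_turn (fun _ => a) 0 0.
Proof.
  exists a, a, a. intros z. split.
  - intros [t [_ Hz]]. left. exists 0. split; [lra|]. rewrite <- Hz.
    destruct a; unfold xc, yc; simpl; f_equal; ring.
  - intros [[l [_ Hz]] | [l [_ Hz]]]; exists 0; (split; [lra|]); rewrite Hz;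
    destruct a; unfold xc, yc; simpl; f_equal; ring.
Qed.

Theorem lemma3p1 (A B : config) (d : R) :
  inF2 A -> inF2 B -> commonly_ordered A B -> d >= diam A B ->
  exists (m1 m2 : R -> pt) (t0 t1 : R),
    trajectory m1 (fst A) (fst B) t0 t1 /\
    trajectory m2 (snd A) (snd B) t0 t1 /\
    feasible m1 m2 t0 t1 /\
    t1 - t0 = d /\
    at_most_one_turn m1 t0 t1 /\ at_most_one_turn m2 t0 t1.
Proof.
  intros HA HB Hco Hd.
  assert (H1 : dist1 (fst A) (fst B) <= d).
  { unfold diam in Hd. pose proof (Rmax_l (dist1 (fst A) (fst B)) (dist1 (snd A) (snd B))). lra. }
  assert (H2 : dist1 (snd A) (snd B) <= d).
  { unfold diam in Hd. pose proof (Rmax_r (dist1 (fst A) (fst B)) (dist1 (snd A) (snd B))). lra. }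
  assert (Hd0 : 0 <= d).
  { unfold dist1 in H1. pose proof (Rabs_pos (xc (fst A) - xc (fst B))).
    pose proof (Rabs_pos (yc (fst A) - yc (fst B))). lra. }
  destruct (Rle_lt_or_eq_dec 0 d Hd0) as [Hpos | H0].
  - destruct (one_robot (fst A) (fst B) d) as [T1 U1]; try lra; auto.
    destruct (one_robot (snd A) (snd B) d) as [T2 U2]; try lra; auto.
    exists (lin (fst A) (fst B) d), (lin (snd A) (snd B) d), 0, d.
    split; [exact T1|]. split; [exact T2|]. split.
    + apply feas_lin; [lra|]. destruct A, B; exact Hco.
    + split; [lra|]. split; assumption.
  - subst d. apply dist1_zero in H1. apply dist1_zero in H2.
    exists (fun _ => fst A), (fun _ => snd A), 0, 0.
    repeat split; try lra; try assumption; try apply const_turn.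
    + intros s t _ _. unfold dist1. rewrite !Rminus_diag, Rabs_R0.
      pose proof (Rabs_pos (s - t)); lra.
    + intros s t _ _. unfold dist1. rewrite !Rminus_diag, Rabs_R0.
      pose proof (Rabs_pos (s - t)); lra.
    + intros t Ht. destruct A; exact HA.
Qed.
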